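(* Let $f\in\mathcal{F}_k$. For every $p\in\Delta_\mathcal{Y}$, with $U=\arg\min_{u'\in\mathbb{R}^k}\sum_yp_yL^f(u',y)$, every $u\in\mathbb{R}^k$ and every $0<\epsilon<2$: if $d_\infty(U,u)<\epsilon$ then $d_\infty(U\cap[-1,1]^k,\boxed{u})<\epsilon$.
   Context: $[k]=\{1,\dots,k\}$, $\mathcal{Y}=\{-1,1\}^k$, $\Delta_\mathcal{Y}$ the distributions on $\mathcal{Y}$; $u\odot u'$ entrywise product, $|u|$ entrywise absolute value, $\mathbbm{1}$ all-ones, $(x)_+$ entrywise positive part; $\boxed{u}=\mathrm{sign}(u)\odot\min(|u|,\mathbbm{1})$. For $A\subseteq\mathbb{R}^k$, $d_\infty(A,u)=\inf_{a\in A}\|a-u\|_\infty$. $\mathcal{F}_k$: submodular, increasing, normalized set functions $f:2^{[k]}\to\mathbb{R}$. Lovász extension $F(x)=\max_\pi\sum_{i=1}^kx_{\pi_i}(f(\{\pi_1,..,\pi_i\})-f(\{\pi_1,..,\pi_{i-1}\}))$; Lovász hinge $L^f(u,y)=F((\mathbbm{1}-u\odot y)_+)$. *)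

(* Defs.v *)
From HB Require Import structures.
From mathcomp Require Import all_boot all_order all_algebra all_fingroup.
From mathcomp Require Import classical_sets reals constructive_ereal ereal.
Set Implicit Arguments. Unset Strict Implicit. Unset Printing Implicit Defensive.
Import Order.TTheory GRing.Theory Num.Theory.
Local Open Scope ring_scope.

Section LovaszDefs.
Variable R : realType.

(* vectors of R^k are functions 'I_k -> R;  Y = {-1,1}^k encoded by
   {ffun 'I_k -> bool}, with true |-> 1 and false |-> -1 *)
Definition lab (k : nat) := {ffun 'I_k -> bool}.
Definition labv (k : nat) (y : lab k) : 'I_k -> R :=
  fun i => if y i then 1 else -1.

Definition is_distr (k : nat) (p : {ffun lab k -> R}) : Prop :=
  (forall y, 0 <= p y) /\ \sum_(y : lab k) p y = 1.

Definition submodular (k : nat) (f : {set 'I_k} -> R) : Prop :=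
  forall A B : {set 'I_k}, f (A :|: B) + f (A :&: B) <= f A + f B.
Definition increasing_setfun (k : nat) (f : {set 'I_k} -> R) : Prop :=
  forall A B : {set 'I_k}, A \subset B -> f A <= f B.
Definition normalized (k : nat) (f : {set 'I_k} -> R) : Prop := f finset.set0 = 0.
Definition in_Fk (k : nat) (f : {set 'I_k} -> R) : Prop :=
  [/\ submodular f, increasing_setfun f & normalized f].

Definition lovasz_term (k : nat) (f : {set 'I_k} -> R) (x : 'I_k -> R)
  (s : {perm 'I_k}) : R :=
  \sum_(i : 'I_k) x (s i) *
     (f [set s j | j in [pred j : 'I_k | (j <= i)%N]]
      - f [set s j | j in [pred j : 'I_k | (j < i)%N]]).
Definition lovasz (k : nat) (f : {set 'I_k} -> R) (x : 'I_k -> R) : R :=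
  \big[Num.max/lovasz_term f x 1%g]_(s : {perm 'I_k}) lovasz_term f x s.

Definition lovasz_hinge (k : nat) (f : {set 'I_k} -> R) (u : 'I_k -> R)
  (y : lab k) : R :=
  lovasz f (fun i => Num.max 0 (1 - u i * labv y i)).

Definition exp_loss (k : nat) (f : {set 'I_k} -> R) (p : {ffun lab k -> R})
  (u : 'I_k -> R) : R := \sum_(y : lab k) p y * lovasz_hinge f u y.
Definition argmin_set (k : nat) (f : {set 'I_k} -> R) (p : {ffun lab k -> R})
  : set ('I_k -> R) :=
  [set u | forall u' : 'I_k -> R, exp_loss f p u <= exp_loss f p u'].

Definition boxed (k : nat) (u : 'I_k -> R) : 'I_k -> R :=
  fun i => Num.sg (u i) * Num.min `|u i| 1.

Definition cube (k : nat) : set ('I_k -> R) :=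
  [set a | forall i, -1 <= a i <= 1].

(* sup norm and d_infty(A,u) = inf_{a in A} ||a - u||_infty (in \bar R,
   = +oo when A is empty) *)
Definition sup_norm (k : nat) (v : 'I_k -> R) : R :=
  \big[Num.max/0]_(i : 'I_k) `|v i|.
Definition d_inf (k : nat) (A : set ('I_k -> R)) (u : 'I_k -> R) : \bar R :=
  ereal_inf [set (sup_norm (fun i => a i - u i))%:E | a in A].

End LovaszDefs.

(* Main.v *)
Require Import Defs.
From HB Require Import structures.
From mathcomp Require Import all_boot all_order all_algebra all_fingroup.
From mathcomp Require Import classical_sets reals constructive_ereal ereal.
From mathcomp Require Import lra.
Import Order.TTheory GRing.Theory Num.Theory.
Local Open Scope ring_scope.
Local Open Scope classical_set_scope.

Section H.
Variable R : realType.

Lemma max_mono (a b c d : R) : a <= c -> b <= d -> Num.max a b <= Num.max c d.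
Proof.
move=> h1 h2; rewrite ge_max !le_max.
by rewrite h1 h2 orbT.
Qed.

Ltac mm := repeat (match goal with
  | |- context[Order.min ?a ?b] => let h := fresh in
      have [h|h] := lerP a b
  | |- context[Num.min ?a ?b] => let h := fresh in
      have [h|h] := lerP a b
  | |- context[Num.max ?a ?b] => let h := fresh in
      have [h|h] := lerP a b
  | |- context[Order.max ?a ?b] => let h := fresh in
      have [h|h] := lerP a b
  end); lra.

Lemma clipE (x : R) : Num.sg x * Num.min `|x| 1 = Num.max (-1) (Num.min x 1).
Proof.
have [xlt|xgt|->] := ltrgtP x 0.
- rewrite ltr0_sg // ltr0_norm //.
  mm.
- rewrite gtr0_sg // gtr0_norm //.
  mm.
- rewrite sgr0 mul0r; mm.
Qed.

Definition clip (x : R) := Num.max (-1) (Num.min x 1).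

Lemma clip_bound (x : R) : -1 <= clip x <= 1.
Proof. rewrite /clip; apply/andP; split; mm. Qed.

Lemma clip_lip (x y : R) : `|clip x - clip y| <= `|x - y|.
Proof.
rewrite /clip.
have [h|h] := lerP x y.
- idtac.
  rewrite ler_norml; apply/andP; split; mm.
- idtac.
  rewrite ler_norml; apply/andP; split; mm.
Qed.

Lemma clip_hinge (x : R) (b : bool) :
  Num.max 0 (1 - clip x * (if b then 1 else -1)) <=
  Num.max 0 (1 - x * (if b then 1 else -1)).
Proof. rewrite /clip; case: b; rewrite ?mulr1 ?mulrN1; mm. Qed.

Lemma boxedE k (u : 'I_k -> R) i : boxed u i = clip (u i).
Proof. by rewrite /boxed clipE. Qed.

Lemma lovasz_mono k (f : {set 'I_k} -> R) (x x' : 'I_k -> R) :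
  increasing_setfun f -> (forall i, x i <= x' i) -> lovasz f x <= lovasz f x'.
Proof.
move=> hinc hx.
have ht : forall s, lovasz_term f x s <= lovasz_term f x' s.
  move=> s; apply: ler_sum => i _; apply: ler_wpM2r; last exact: hx.
  rewrite subr_ge0; apply: hinc; apply: imsetS.
  apply/fintype.subsetP => j; rewrite !inE /=; exact: ltnW.
rewrite /lovasz; apply: (big_ind2 (fun a b : R => a <= b)) => [|a b c d h1 h2|s _]; first exact: ht.
  exact: max_mono.
exact: ht.
Qed.

Lemma sup_norm_box k (a u : 'I_k -> R) :
  sup_norm (fun i => boxed a i - boxed u i) <= sup_norm (fun i => a i - u i).
Proof.
rewrite /sup_norm; apply: (big_ind2 (fun a b : R => a <= b)) => [//|? ? ? ? h1 h2|i _].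
  exact: max_mono.
rewrite !boxedE; exact: clip_lip.
Qed.

End H.

Theorem lemma10 (R : realType) (k : nat) (f : {set 'I_k} -> R)
  (hf : in_Fk f) (p : {ffun lab k -> R}) (hp : is_distr p)
  (u : 'I_k -> R) (eps : R) (heps0 : 0 < eps) (heps2 : eps < 2) :
  (d_inf (argmin_set f p) u < eps%:E)%E ->
  (d_inf (argmin_set f p `&` @cube R k) (boxed u) < eps%:E)%E.
Proof.
move=> /ereal_inf_lt [z [a Ha <-]] hlt.
case: hf => _ hinc _.
have hexp : exp_loss f p (boxed a) <= exp_loss f p a.
  apply: ler_sum => y _; apply: ler_wpM2l; first exact: hp.1.
  apply: lovasz_mono => // i; rewrite boxedE; exact: clip_hinge.
apply: (le_lt_trans _ (le_lt_trans _ hlt)).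
  apply: ereal_inf_lbound; exists (boxed a) => //; split.
    by move=> u'; apply: le_trans hexp (Ha u').
  by move=> i; rewrite boxedE; exact: clip_bound.
rewrite lee_fin; exact: sup_norm_box.
Qed.
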